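(* Suppose there is $s\in\{-1,1\}$ with $s\rho_i\ge0$ for all $i$, and the $\rho_i$ are not all zero. Then $u_n>0$ entrywise and $s\,v_n<0$ entrywise (i.e. $v_n$ has constant sign $-s$). Consequently the vector $\bar z_n^S=u_n\vartheta_n^\star+v_n$ either is identically zero or has at least one strictly positive and at least one strictly negative component.
   Context: Fix $n\ge1$, $\sigma>0$, and for each $i$: $c_i>0$, $\gamma_i>0$, $\nu_i>0$, $\rho_i\in(-1,1)$. Define $p_{i,j}=\frac{1}{\gamma_i\nu_j^2}$ for $j\ne i$ and $p_{i,i}=\frac{1}{\gamma_i\nu_i^2+1/c_i}$; for each $j$: $\Theta_{j,n}=\sum_{i=1}^np_{i,j}$, $\zeta_j=p_{j,j}/c_j$, $a_j=\rho_j\zeta_j/\nu_j$, $w_{j,n}=\frac{1}{n\Theta_{j,n}}$; for each $k$: $M_{k,j}=\rho_j\nu_jp_{k,j}$, $\upsilon_{k,n}=\sum_{j=1}^n\rho_j^2\nu_j^2p_{k,j}$, $\varphi_{k,n}=1-\frac{\gamma_k}{n}\upsilon_{k,n}$. Define the $n\times n$ matrix $L_n$ by $(L_n)_{k,j}=\frac{\rho_j^2\zeta_jp_{k,j}}{n\varphi_{k,n}\Theta_{j,n}}$ and vectors $V_n,U_n$ by $(V_n)_k=\frac{n}{\gamma_k\sigma^2\varphi_{k,n}}$, $(U_n)_k=-\frac{1}{\varphi_{k,n}}\Big(\frac{1}{\sigma\sqrt n}\sum_{j=1}^n\frac{1-\zeta_j}{\Theta_{j,n}}M_{k,j}+\frac{1}{\sigma\sqrt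 n}\frac{\rho_k\nu_k}{c_k}p_{k,k}\Big)$. It is known that $\mathrm I_n-L_n$ is invertible with entrywise nonnegative inverse. Set $u_n=(\mathrm I_n-L_n)^{-1}V_n$, $v_n=(\mathrm I_n-L_n)^{-1}U_n$, $\vartheta_n^\star=-\frac{\mathbf 1_n^\top v_n}{\mathbf 1_n^\top u_n}$. (The vector $u_n\vartheta_n^\star+v_n$ is the $z^S$-part of the maximiser of $g(z^Q,z^S)=-\frac1n\sum_i\big(\frac{(z^{Q,i,i})^2}{2c_i}+\frac{\gamma_i}{2}\sum_j\nu_j^2(z^{Q,i,j})^2+\frac{\gamma_i\sigma^2}{2}(z^{S,i})^2+\frac{\gamma_i\sigma}{\sqrt n}z^{S,i}\sum_j\rho_j\nu_jz^{Q,i,j}\big)+\frac1n\sum_i\frac{z^{Q,i,i}}{c_i}$ subject to $\sum_iz^{Q,i,j}=1$ for all $j$ and $\sum_kz^{S,k}=0$.) *)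

(* Defs.v *)
From mathcomp Require Import all_boot all_order all_algebra.
Set Implicit Arguments. Unset Strict Implicit. Unset Printing Implicit Defensive.
Import Order.TTheory GRing.Theory Num.Theory.
Local Open Scope ring_scope.

Section Model.
Variables (R : rcfType) (n : nat) (sigma : R).
Variables (c gamma nu rho : 'I_n -> R).

Definition pp (i j : 'I_n) : R :=
  if i == j then 1 / (gamma i * nu i ^+ 2 + 1 / c i)
  else 1 / (gamma i * nu j ^+ 2).
Definition Theta (j : 'I_n) : R := \sum_(i < n) pp i j.
Definition zeta (j : 'I_n) : R := pp j j / c j.
Definition MM (k j : 'I_n) : R := rho j * nu j * pp k j.
Definition upsilon (k : 'I_n) : R := \sum_(j < n) rho j ^+ 2 * nu j ^+ 2 * pp k j.
Definition varphi (k : 'I_n) : R := 1 - gamma k / n%:R * upsilon k.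

Definition Lmx : 'M[R]_n :=
  \matrix_(k < n, j < n)
    (rho j ^+ 2 * zeta j * pp k j / (n%:R * varphi k * Theta j)).
Definition Vvec : 'cV[R]_n :=
  \col_(k < n) (n%:R / (gamma k * sigma ^+ 2 * varphi k)).
Definition Uvec : 'cV[R]_n :=
  \col_(k < n) (- (1 / varphi k) *
     (1 / (sigma * Num.sqrt n%:R) *
        \sum_(j < n) ((1 - zeta j) / Theta j * MM k j)
      + 1 / (sigma * Num.sqrt n%:R) * (rho k * nu k / c k * pp k k))).

Definition uvec : 'cV[R]_n := invmx (1%:M - Lmx) *m Vvec.
Definition vvec : 'cV[R]_n := invmx (1%:M - Lmx) *m Uvec.
Definition thetastar : R :=
  - (\sum_(k < n) vvec k 0) / (\sum_(k < n) uvec k 0).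
Definition zbar : 'cV[R]_n := thetastar *: uvec + vvec.
End Model.

(* Main.v *)
Require Import Defs.
From mathcomp Require Import all_boot all_order all_algebra.
From mathcomp Require Import ring lra.
Import Order.TTheory GRing.Theory Num.Theory.
Local Open Scope ring_scope.

Section Gen.
Variables (R : realFieldType) (n : nat) (L : 'M[R]_n) (w : 'I_n -> R) (d : R).
Hypotheses (L0 : forall i j, 0 <= L i j) (w0 : forall i, 0 < w i) (d0 : 0 < d)
  (wL : forall j, \sum_k w k * L k j = w j - d).

Lemma entryIL (x : 'cV[R]_n) k :
  ((1%:M - L) *m x) k 0 = x k 0 - \sum_j L k j * x j 0.
Proof. by rewrite mulmxBl mul1mx !mxE. Qed.

Lemma maxprin (x : 'cV[R]_n) :
  (forall k, 0 <= ((1%:M - L) *m x) k 0) -> forall k, 0 <= x k 0.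
Proof.
move=> hb.
pose m j := Num.min (x j 0) 0.
have m0 : forall j, m j <= 0 by move=> j; rewrite /m ge_min lexx orbT.
have hm : forall k, \sum_j L k j * m j <= m k.
  move=> k; rewrite /m le_min; apply/andP; split.
    apply: (le_trans (y := \sum_j L k j * x j 0)).
      apply: ler_sum => j _; apply: ler_wpM2l; [exact: L0|]; rewrite ge_min lexx //.
    by have := hb k; rewrite entryIL subr_ge0.
  by apply: sumr_le0 => j _; exact: mulr_ge0_le0 (L0 _ _) (m0 _).
have H1 : \sum_k w k * (\sum_j L k j * m j) <= \sum_k w k * m k.
  by apply: ler_sum => k _; apply: ler_wpM2l; [exact: ltW|].
have H2 : \sum_k w k * (\sum_j L k j * m j) = \sum_k w k * m k - d * \sum_j m j.
  under eq_bigr => k _ do rewrite mulr_sumr.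
  rewrite exchange_big /=.
  under eq_bigr => j _ do (under eq_bigr => k _ do rewrite mulrA; rewrite -mulr_suml wL mulrBl).
  by rewrite sumrB mulr_sumr; congr (_ - _); apply: eq_bigr => j _; rewrite mulrC.
rewrite H2 in H1.
have Hs : 0 <= \sum_j m j.
  have : 0 <= d * \sum_j m j by lra.
  by rewrite pmulr_rge0.
move=> k; rewrite leNgt; apply/negP => xk.
have mk : m k = x k 0 by rewrite /m; apply/min_idPl; exact: ltW.
have : \sum_j m j <= m k.
  rewrite (bigD1 k) //=; apply: ler_wnDr => //; apply: sumr_le0 => j _; exact: m0.
lra.
Qed.

Lemma IL_unit : (1%:M - L) \in unitmx.
Proof.
rewrite unitmxE unitfE -det_tr; apply/negP => /det0P [v vn0 hv].
have hx : (1%:M - L) *m v^T = 0 by rewrite -[_ *m _]trmxK trmx_mul trmxK hv trmx0.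
have a : forall k, 0 <= (v^T) k 0.
  by apply: maxprin => k; rewrite hx mxE.
have b : forall k, 0 <= (- v^T) k 0.
  by apply: maxprin => k; rewrite mulmxN hx oppr0 mxE.
move/negP: vn0; apply; apply/eqP/matrixP => i j.
have := a j; have := b j; rewrite (ord1 i) !mxE; lra.
Qed.

Lemma pos_sol (b : 'cV[R]_n) : (forall k, 0 < b k 0) ->
  forall k, 0 < (invmx (1%:M - L) *m b) k 0.
Proof.
move=> hb k; set x := invmx _ *m b.
have hx : (1%:M - L) *m x = b by rewrite /x mulmxA mulmxV ?mul1mx //; exact: IL_unit.
have xp : forall k, 0 <= x k 0 by apply: maxprin => k'; rewrite hx; exact: ltW.
have := hb k; rewrite -hx entryIL.
have : 0 <= \sum_j L k j * x j 0 by apply: sumr_ge0 => j _; exact: mulr_ge0.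
lra.
Qed.
End Gen.

Section Conc.
Variables (R : rcfType) (n : nat) (sigma : R) (c gamma nu rho : 'I_n -> R) (s : R).
Hypotheses (hn : (0 < n)%N) (hsig : 0 < sigma) (hc : forall i, 0 < c i)
  (hg : forall i, 0 < gamma i) (hnu : forall i, 0 < nu i)
  (hrho : forall i, -1 < rho i < 1).

Local Notation P := (pp c gamma nu).
Local Notation Z := (zeta c gamma nu).
Local Notation Th := (Theta c gamma nu).
Local Notation ph := (varphi c gamma nu rho).

Lemma ppP i j : 0 < P i j.
Proof.
rewrite /pp; case: (i == j); apply: divr_gt0 => //.
  apply: addr_gt0; [apply: mulr_gt0 => //; exact: exprn_gt0|exact: divr_gt0].
apply: mulr_gt0 => //; exact: exprn_gt0.
Qed.

Lemma key k j : gamma k * nu j ^+ 2 * P k j = if k == j then 1 - Z k else 1.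
Proof.
rewrite /zeta /pp; case: eqP => [<-|_] /=; rewrite ?eqxx.
  have h1 : c k != 0 by rewrite gt_eqF.
  have h2 : gamma k * nu k ^+ 2 * c k + 1 != 0.
    rewrite gt_eqF //; apply: addr_gt0 => //; apply: mulr_gt0 => //; apply: mulr_gt0 => //; exact: exprn_gt0.
  by field; rewrite h1 h2.
have h1 : gamma k != 0 by rewrite gt_eqF.
have h2 : nu j != 0 by rewrite gt_eqF.
by field; rewrite h1 h2.
Qed.

Lemma ZP j : 0 < Z j < 1.
Proof.
have := key j j; rewrite eqxx => e.
have := ppP j j; have := hc j => cj pj.
apply/andP; split; first exact: divr_gt0.
have : 0 < gamma j * nu j ^+ 2 * P j j.
  apply: mulr_gt0 => //; apply: mulr_gt0 => //; exact: exprn_gt0.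
rewrite e; lra.
Qed.

Lemma ThP j : 0 < Th j.
Proof.
rewrite /Theta (bigD1 j) //=; apply: ltr_wpDr; last exact: ppP.
by apply: sumr_ge0 => i _; exact: ltW (ppP i j).
Qed.

Definition Srho := \sum_i rho i ^+ 2.
Definition dd := 1 - Srho / n%:R.

Lemma nP : 0 < n%:R :> R.
Proof. by rewrite ltr0n. Qed.

Lemma ddP : 0 < dd.
Proof.
rewrite /dd subr_gt0 ltr_pdivrMr ?nP // mul1r.
have -> : n%:R = \sum_(i < n) (1 : R) by rewrite sumr_const card_ord.
rewrite /Srho; apply: ltr_sum; first by apply/hasP; exists (Ordinal hn); rewrite ?mem_index_enum.
move=> i _; have := hrho i; case/andP => a b.
rewrite -subr_gt0 (_ : 1 - rho i ^+ 2 = (1 - rho i) * (1 + rho i)); last by ring.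
apply: mulr_gt0; lra.
Qed.

Lemma phE k : ph k = dd + rho k ^+ 2 * Z k / n%:R.
Proof.
rewrite /varphi /upsilon /dd.
have e : gamma k / n%:R * \sum_j rho j ^+ 2 * nu j ^+ 2 * P k j
   = (\sum_j rho j ^+ 2 * (if k == j then 1 - Z k else 1)) / n%:R.
  have h : n%:R != 0 :> R by rewrite gt_eqF // nP.
  rewrite mulr_sumr mulr_suml; apply: eq_bigr => j _; rewrite -key.
  by field; rewrite h.
rewrite e /Srho (bigD1 k) //= eqxx [X in _ = 1 - X / _ + _](bigD1 k) //=.
have -> : \sum_(i | i != k) rho i ^+ 2 * (if k == i then 1 - Z k else 1)
        = \sum_(i | i != k) rho i ^+ 2.
  by apply: eq_bigr => i /negPf; rewrite eq_sym => ->; rewrite mulr1.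
have : n%:R != 0 :> R by rewrite gt_eqF // nP.
move=> h; field; exact: h.
Qed.

Lemma phP k : 0 < ph k.
Proof.
rewrite phE; apply: ltr_wpDr; last exact: ddP.
apply: divr_ge0; last exact: ltW nP.
apply: mulr_ge0; [exact: sqr_ge0|]; by case/andP: (ZP k) => /ltW.
Qed.

Lemma L0 i j : 0 <= Lmx c gamma nu rho i j.
Proof.
rewrite mxE; apply: divr_ge0.
  apply: mulr_ge0; [apply: mulr_ge0; [exact: sqr_ge0|by case/andP: (ZP j) => /ltW]|exact: ltW (ppP i j)].
apply: mulr_ge0; [apply: mulr_ge0; [exact: ltW nP|exact: ltW (phP i)]|exact: ltW (ThP j)].
Qed.

Lemma wL j : \sum_k ph k * Lmx c gamma nu rho k j = ph j - dd.
Proof.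
have e : forall k, ph k * Lmx c gamma nu rho k j = rho j ^+ 2 * Z j / (n%:R * Th j) * P k j.
  move=> k; rewrite mxE.
  have h1 : ph k != 0 by rewrite gt_eqF // phP.
  have h2 : Th j != 0 by rewrite gt_eqF // ThP.
  have h3 : n%:R != 0 :> R by rewrite gt_eqF // nP.
  by field; rewrite h1 h2 h3.
under eq_bigr => k _ do rewrite e.
rewrite -mulr_sumr -/(Th j) phE.
have h2 : Th j != 0 by rewrite gt_eqF // ThP.
have h3 : n%:R != 0 :> R by rewrite gt_eqF // nP.
by field; rewrite h2 h3.
Qed.


Lemma Vpos k : 0 < Vvec sigma c gamma nu rho k 0.
Proof.
rewrite mxE; apply: divr_gt0; first exact: nP.
apply: mulr_gt0; last exact: phP.
apply: mulr_gt0 => //; exact: exprn_gt0.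
Qed.

Hypotheses (hs : s = 1 \/ s = -1) (hsr : forall i, 0 <= s * rho i)
  (hex : exists i, rho i != 0).

Lemma sUpos k : 0 < - (s * Uvec sigma c gamma nu rho k 0).
Proof.
rewrite mxE.
set A := 1 / (sigma * Num.sqrt n%:R).
set S := \sum_j _.
set T := rho k * nu k / c k * P k k.
have -> : - (s * (- (1 / ph k) * (A * S + A * T))) = (1 / ph k) * A * (s * S + s * T) by ring.
have Ap : 0 < A.
  rewrite /A; apply: divr_gt0 => //; apply: mulr_gt0 => //; rewrite sqrtr_gt0; exact: nP.
apply: mulr_gt0; first by apply: mulr_gt0 => //; apply: divr_gt0 => //; exact: phP.
have eS : s * S = \sum_j (1 - Z j) / Th j * nu j * P k j * (s * rho j).
  rewrite /S mulr_sumr; apply: eq_bigr => j _; rewrite /MM; ring.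
have hT : 0 <= s * T.
  have -> : s * T = (s * rho k) * (nu k / c k * P k k) by rewrite /T; ring.
  apply: mulr_ge0 => //; apply: mulr_ge0; last exact: ltW (ppP k k).
  by apply: divr_ge0; apply: ltW.
have tj : forall j, 0 <= (1 - Z j) / Th j * nu j * P k j.
  move=> j; apply: mulr_ge0; last exact: ltW (ppP k j).
  apply: mulr_ge0; last exact: ltW.
  apply: divr_ge0; last exact: ltW (ThP j).
  by case/andP: (ZP j) => _; rewrite -subr_gt0 => /ltW.
apply: ltr_wpDr => //; rewrite eS.
case: hex => i ri.
have si : 0 < s * rho i.
  rewrite lt_def hsr andbT mulf_neq0 //; case: hs => ->; rewrite ?oppr_eq0 oner_eq0 //.
rewrite (bigD1 i) //=; apply: ltr_wpDr.
  by apply: sumr_ge0 => j _; apply: mulr_ge0.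
apply: mulr_gt0 => //.
apply: mulr_gt0; last exact: ppP.
apply: mulr_gt0 => //.
apply: divr_gt0; last exact: ThP.
by case/andP: (ZP i) => _; rewrite subr_gt0.
Qed.

End Conc.

Theorem mainTheorem9 (R : rcfType) (n : nat) (sigma : R)
  (c gamma nu rho : 'I_n -> R) (s : R) :
  (0 < n)%N ->
  0 < sigma ->
  (forall i, 0 < c i) -> (forall i, 0 < gamma i) -> (forall i, 0 < nu i) ->
  (forall i, -1 < rho i < 1) ->
  (s = 1 \/ s = -1) ->
  (forall i, 0 <= s * rho i) ->
  (exists i, rho i != 0) ->
  (forall k, 0 < uvec sigma c gamma nu rho k 0) /\
  (forall k, s * vvec sigma c gamma nu rho k 0 < 0) /\
  (zbar sigma c gamma nu rho = 0 \/
   ((exists k, 0 < zbar sigma c gamma nu rho k 0) /\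
    (exists k, zbar sigma c gamma nu rho k 0 < 0))).
Proof.
move=> hn hsig hc hg hnu hrho hs hsr hex.
have Lnn : forall i j, 0 <= Lmx c gamma nu rho i j by move=> i j; apply: L0 => //.
have wl : forall j, \sum_k varphi c gamma nu rho k * Lmx c gamma nu rho k j
    = varphi c gamma nu rho j - @dd R n rho by move=> j; apply: wL => //.
have wp : forall k, 0 < varphi c gamma nu rho k by move=> k; apply: phP => //.
have dp : 0 < @dd R n rho by apply: ddP.
have up : forall k, 0 < uvec sigma c gamma nu rho k 0.
  rewrite /uvec; apply: (@pos_sol _ _ _ _ _ Lnn wp dp wl) => k; apply: Vpos => //.
have vp : forall k, s * vvec sigma c gamma nu rho k 0 < 0.
  move=> k.
  have := @pos_sol _ _ _ _ _ Lnn wp dp wl (- (s *: Uvec sigma c gamma nu rho)).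
  move=> /(_ _ k); rewrite mulmxN -scalemxAr !mxE -/(vvec _ _ _ _ _) oppr_gt0.
  apply=> k'; rewrite 2!mxE; apply: sUpos => //.
split => //; split => //.
pose u := uvec sigma c gamma nu rho; pose v := vvec sigma c gamma nu rho.
have su : 0 < \sum_k u k 0.
  rewrite (bigD1 (Ordinal hn)) //=; apply: ltr_wpDr; last exact: up.
  by apply: sumr_ge0 => k _; apply: ltW.
have sz : \sum_k zbar sigma c gamma nu rho k 0 = 0.
  rewrite /zbar /thetastar -/u -/v.
  under eq_bigr => k _ do rewrite 2!mxE.
  rewrite big_split /= -mulr_sumr.
  have h : \sum_k u k 0 != 0 by rewrite gt_eqF.
  by field; rewrite h.
set z := zbar sigma c gamma nu rho in sz *.
suff : (forall k, z k 0 <= 0) \/ (forall k, 0 <= z k 0) \/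
   ((exists k, 0 < z k 0) /\ (exists k, z k 0 < 0)).
  case=> [hp|[hq|h]]; last by right.
    left; apply/matrixP => i j; rewrite (ord1 j) [RHS]mxE.
    apply/eqP; rewrite -oppr_eq0; apply/eqP; move: i.
    have hn' : \sum_k - z k 0 = 0 by rewrite sumrN sz oppr0.
    move=> i; apply: (psumr_eq0P _ hn') => // k _; rewrite oppr_ge0; exact: hp.
  left; apply/matrixP => i j; rewrite (ord1 j) [RHS]mxE; move: i.
  move=> i; apply: (psumr_eq0P _ sz) => // k _; exact: hq.
case: (pickP (fun k => 0 < z k 0)) => [k1 h1|hp].
  case: (pickP (fun k => z k 0 < 0)) => [k2 h2|hq].
    by right; right; split; [exists k1|exists k2].
  by right; left => k; rewrite leNgt hq.
by left => k; rewrite leNgt hp.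
Qed.
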